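(* For all integers $1\le k\le n$, $S(n,n-k+1,k)=\binom{n}{k-1}$.
   Context: A $k$-CNF formula is a conjunction of clauses (disjunctions of literals) each of width at most $k$. $\mathrm{sat}_t(F)$ is the set of satisfying assignments of $F$ of Hamming weight exactly $t$. $F$ is $t$-admissible if it has no satisfying assignment of Hamming weight less than $t$. $S(n,t,k)$ is the maximum of $|\mathrm{sat}_t(F)|$ over all $t$-admissible $k$-CNF formulas $F$ on $n$ variables. *)

(* Defs.v *)
From mathcomp Require Import all_boot.
Set Implicit Arguments. Unset Strict Implicit. Unset Printing Implicit Defensive.

(* A literal is a pair (i, b): it is the positive literal x_i if b = true
   and the negative literal ~x_i if b = false. *)
Definition literal n := ('I_n * bool)%type.
Definition clause n := {set literal n}.
Definition cnf n := {set clause n}.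
Definition assignment n := {ffun 'I_n -> bool}.

Definition lit_sat n (a : assignment n) (l : literal n) : bool := a l.1 == l.2.
Definition clause_sat n (a : assignment n) (C : clause n) : bool :=
  [exists l in C, lit_sat a l].
Definition cnf_sat n (a : assignment n) (F : cnf n) : bool :=
  [forall C in F, clause_sat a C].

Definition weight n (a : assignment n) : nat := #|[set i | a i]|.

Definition is_kCNF n (k : nat) (F : cnf n) : bool := [forall C in F, #|C| <= k].

Definition sat_t n (t : nat) (F : cnf n) : {set assignment n} :=
  [set a | cnf_sat a F & weight a == t].

Definition admissible n (t : nat) (F : cnf n) : bool :=
  [forall a : assignment n, cnf_sat a F ==> (t <= weight a)].

Definition S (n t k : nat) : nat :=
  \max_(F : cnf n | is_kCNF k F && admissible t F) #|sat_t t F|.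

(* Main.v *)
Require Import Defs.
From mathcomp Require Import all_boot.
From mathcomp Require Import zify.

Lemma card_wt n t : #|[set a : assignment n | weight a == t]| = 'C(n, t).
Proof.
pose g := fun A : {set 'I_n} => ([ffun i => i \in A] : assignment n).
have ginj : injective g.
  move=> A B /ffunP h; apply/setP=> i; have := h i; rewrite !ffunE; done.
have -> : [set a : assignment n | weight a == t] = g @: [set A : {set 'I_n} | #|A| == t].
  apply/setP=> a; rewrite inE; apply/idP/imsetP.
  - move=> /eqP w; exists [set i | a i]; first by rewrite inE -w.
    by apply/ffunP=> i; rewrite ffunE inE.
  - case=> A; rewrite inE => /eqP hA ->; rewrite /weight.
    have -> : [set i | g A i] = A by apply/setP=> i; rewrite inE ffunE.
    by rewrite hA.
by rewrite card_imset // card_draws card_ord.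
Qed.

Definition F0 n k : cnf n := [set C : clause n | (#|C| == k) && [forall l in C, l.2]].

Lemma wt_false n (a : assignment n) : weight a + #|[set i | ~~ a i]| = n.
Proof.
have -> : [set i | ~~ a i] = ~: [set i | a i] by apply/setP=> i; rewrite !inE.
by rewrite /weight cardsC card_ord.
Qed.

Lemma F0_sat n k (a : assignment n) : cnf_sat a (F0 n k) = (#|[set i | ~~ a i]| < k).
Proof.
set D := [set i | ~~ a i].
apply/idP/idP.
- move=> hs; rewrite ltnNge; apply/negP=> hD.
  pose s := take k (enum D).
  have us : uniq s by rewrite /s take_uniq // enum_uniq.
  pose C : clause n := [set (i, true) | i in [set x in s]].
  have cC : #|C| = k.
    rewrite card_imset; last by move=> x y [].
    rewrite cardsE (card_uniqP us) size_take -cardE.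
    by case: ltnP hD => // h1 h2; apply/eqP; rewrite eqn_leq h1 h2.
  have CF : C \in F0 n k.
    rewrite inE cC eqxx /=; apply/forall_inP=> l /imsetP [i _ ->] //.
  move/forall_inP: hs => /(_ C CF) /exists_inP [l /imsetP [i hi ->]].
  rewrite /lit_sat /=; rewrite inE in hi.
  have : i \in D by rewrite -mem_enum; exact: mem_take hi.
  by rewrite inE => /negPf ->.
- move=> hD; apply/forall_inP=> C; rewrite inE => /andP [/eqP cC /forall_inP pos].
  rewrite /clause_sat; apply: contraT; rewrite negb_exists_in => /forall_inP hn.
  have sub : [set l.1 | l in C] \subset D.
    apply/subsetP=> i /imsetP [l lC ->]; rewrite inE.
    have := hn l lC; rewrite /lit_sat /= (pos l lC).
    by case: (a l.1).
  have := subset_leq_card sub; rewrite card_in_imset.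
    by rewrite cC leqNgt hD.
  move=> [i b] [j c] /pos /= -> /pos /= -> /= -> //.
Qed.

Theorem lemma3 (n k : nat) (hk1 : 1 <= k) (hkn : k <= n) :
  S n (n - k + 1) k = 'C(n, k - 1).
Proof.
have eC : 'C(n, k - 1) = 'C(n, n - k + 1).
  by rewrite -(bin_sub (_ : k - 1 <= n)); [congr 'C(_,_); lia | lia].
rewrite eC -card_wt.
have satF0 : forall a : assignment n, cnf_sat a (F0 n k) = (n - k + 1 <= weight a).
  move=> a; rewrite F0_sat; have := @wt_false _ a; lia.
apply/eqP; rewrite eqn_leq; apply/andP; split.
- apply/bigmax_leqP => F _; apply: subset_leq_card; apply/subsetP => a.
  by rewrite !inE => /andP [_ ->].
- have HP : is_kCNF k (F0 n k) && admissible (n - k + 1) (F0 n k).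
    apply/andP; split.
      by apply/forall_inP=> C; rewrite inE => /andP [/eqP -> _].
    by apply/forallP=> a; apply/implyP; rewrite satF0.
  rewrite /S; apply: (leq_trans _ (@leq_bigmax_cond _ (fun F => is_kCNF k F && admissible (n - k + 1) F) (fun F => #|sat_t (n - k + 1) F|) _ HP)).
  apply: subset_leq_card; apply/subsetP => a; rewrite !inE => /eqP w.
  by rewrite satF0 w leqnn eqxx.
Qed.
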